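(* Let $C$ be a circuit over variables $x_1,\dots,x_n$ that may also contain gates computing the constants $0$ and $1$, and suppose that (as a function of $x_1,\dots,x_n$) $C$ does not imply any variable $x_i$ and is not implied by any variable $x_i$. Let $u,v$ be new variables, let $C(x_1,\dots,x_n,u,v)$ denote the circuit obtained from $C$ by replacing every constant-$1$ gate by $u$ and every constant-$0$ gate by $v$, and let $C'=t_2(u,C(x_1,\dots,x_n,u,v),v)$. Then $\{u,v\}$ is the only dominant pair for $C'$.
   Context: $t_2(x,y,z)=(x\wedge y)\vee(x\wedge z)\vee(y\wedge z)$ is the ternary majority function. A circuit $C$ implies a variable $x$ if every satisfying assignment of $C$ sets $x$ to 1; $C$ is implied by $x$ if every assignment setting $x$ to 1 satisfies $C$. A pair of two distinct variables $\{s,t\}$ is dominant for a circuit $C$ if for every $\alpha\in\{0,1\}$ and every truth assignment $I$ with $I(s)=I(t)=\alpha$, $I$ satisfies $C$ if and only if $\alpha=1$. *)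

(* Defs.v *)
From mathcomp Require Import all_boot.
Set Implicit Arguments. Unset Strict Implicit. Unset Printing Implicit Defensive.

(* Boolean circuits over variables of type V, represented as expression trees
   (the semantics of a DAG circuit is that of its tree unfolding). *)
Inductive circuit (V : Type) : Type :=
| Var of V
| Const of bool
| Gate of (seq bool -> bool) & seq (circuit V).
Arguments Const {V}.

Fixpoint eval (V : Type) (I : V -> bool) (C : circuit V) : bool :=
  match C with
  | Var x => I x
  | Const b => b
  | Gate f args => f (map (eval I) args)
  end.

Definition implies_var (V : Type) (C : circuit V) (x : V) : Prop :=
  forall I : V -> bool, eval I C -> I x.

Definition implied_by_var (V : Type) (C : circuit V) (x : V) : Prop :=
  forall I : V -> bool, I x -> eval I C.

Definition dominant_pair (V : eqType) (C : circuit V) (s t : V) : Prop :=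
  s != t /\
  forall (alpha : bool) (I : V -> bool),
    I s = alpha -> I t = alpha -> (eval I C = alpha).

Definition t2 (a b c : bool) : bool := [|| a && b, a && c | b && c].
Definition t2_gate (s : seq bool) : bool :=
  if s is [:: a; b; c] then t2 a b c else false.

(* New variables: old variables are [inl x]; u := inr true, v := inr false. *)
Definition var_u (V : Type) : V + bool := inr true.
Definition var_v (V : Type) : V + bool := inr false.

Fixpoint replace_consts (V : Type) (C : circuit V) : circuit (V + bool) :=
  match C with
  | Var x => Var (inl x)
  | Const b => Var (inr b)
  | Gate f args => Gate f (map (@replace_consts V) args)
  end.

Definition Cprime (V : Type) (C : circuit V) : circuit (V + bool) :=
  Gate t2_gate [:: Var (var_u V); replace_consts C; Var (var_v V)].

(* Main.v *)
Require Import Defs.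
From mathcomp Require Import all_boot.
From Stdlib Require Import Classical.

Definition ext {n : nat} (J : 'I_n -> bool) (z : 'I_n + bool) : bool :=
  match z with inl k => J k | inr b => b end.

Lemma rc_eval {n : nat} (J : 'I_n -> bool) :
  forall C : circuit 'I_n, eval (ext J) (replace_consts C) = eval J C.
Proof.
fix IH 1. case=> [x|b|f args] //=. congr f.
move: args; fix IHl 1; case => [|a l] //=. by rewrite IH IHl.
Qed.

Lemma cp_eval {n : nat} (J : 'I_n -> bool) (C : circuit 'I_n) :
  eval (ext J) (Cprime C) = eval J C.
Proof. by rewrite /= rc_eval /t2; case: (eval J C). Qed.

Lemma no_u (n : nat) (C : circuit 'I_n) i :
  (forall i : 'I_n, ~ implied_by_var C i) ->
  ~ (forall I, I (inl i) = true -> I (var_u 'I_n) = true -> eval I (Cprime C) = true).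
Proof.
move=> H2 D. apply: (H2 i) => J Ji. rewrite -(cp_eval J). by apply: D.
Qed.

Lemma no_v (n : nat) (C : circuit 'I_n) i :
  (forall i : 'I_n, ~ implies_var C i) ->
  ~ (forall I, I (inl i) = false -> I (var_v 'I_n) = false -> eval I (Cprime C) = false).
Proof.
move=> H1 D. apply: (H1 i) => J CJ. apply/negPn/negP => /negbTE Ji.
by move: (D (ext J) Ji erefl); rewrite cp_eval CJ.
Qed.

Theorem lemma4p10 (n : nat) (C : circuit 'I_n) :
  (forall i : 'I_n, ~ implies_var C i) ->
  (forall i : 'I_n, ~ implied_by_var C i) ->
  dominant_pair (Cprime C) (var_u 'I_n) (var_v 'I_n) /\
  (forall s t : 'I_n + bool, dominant_pair (Cprime C) s t ->
     (s = var_u 'I_n /\ t = var_v 'I_n) \/ (s = var_v 'I_n /\ t = var_u 'I_n)).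
Proof.
move=> H1 H2; split.
  split; first by [].
  move=> alpha I Hu Hv; rewrite /= Hu Hv /t2; by case: (alpha); case: (eval _ _).
move=> s t [st D].
case: s st D => [i|b]; case: t => [j|b'] st D.
- exfalso. move: (D true (fun z => if z is inl _ then true else false) erefl erefl).
  by rewrite /= /t2; case: (eval _ _).
- exfalso. case: b' D {st} => D.
  + apply: (@no_u _ C i H2) => I Hi Hu. exact: D.
  + apply: (@no_v _ C i H1) => I Hi Hu. exact: D.
- exfalso. case: b D {st} => D.
  + apply: (@no_u _ C j H2) => I Hi Hu. exact: D.
  + apply: (@no_v _ C j H1) => I Hi Hu. exact: D.
- by case: b b' st D => [] [] // _ _; [left|right].
Qed.
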